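(* Let $\mathcal{M}_{\mathcal{T}}$ be a staged tree model. Let $H$ be the $(|I|+|F|)\times|J|$ matrix with rows indexed by $I\sqcup F$ and entries $h_{ij}=\mu_{ij}$ for $i\in I$ and $h_{fj}=-\sum_{s_\ell\in f}\mu_{\ell j}$ for $f\in F$. Define $\lambda\in\{-1,+1\}^{|J|}$ by $\lambda_j=(-1)^{\sum_f h_{fj}}$. Then the pair $(\tilde H,\tilde\lambda)$ obtained from $(H,\lambda)$ by summing collinear rows and deleting zero rows is the Horn pair of $\mathcal{M}_{\mathcal{T}}$, i.e. it is a Horn pair whose Horn map equals the MLE of $\mathcal{M}_{\mathcal{T}}$ and has image $\mathcal{M}_{\mathcal{T}}$.
   Context: Staged tree: a directed rooted tree $\mathcal{T}$, every non-leaf vertex with at least two outgoing edges, with edge labels from $\{s_i:i\in I\}$ such that any two florets (multisets of labels on the outgoing edges of a vertex) are equal or disjoint; $F$ is the set of florets, $J$ the set of root-to-leaf paths ($|J|=n+1$), $\mu_{ij}$ the number of occurrences of $s_i$ on path $j$. The model $\mathcal{M}_{\mathcal{T}}\subseteq\Delta_n$ is the image of $\{(s_i)\in(0,1)^{|I|}:\sum_{s_i\in f}s_i=1\ \forall f\}$ under $p_j=\prod_i s_i^{\mu_{ij}}$. For an integer matrix $H=(h_{ij})$ with columns $h_j$ summing to zero and a vector $\lambda$, write $(Hu)^{h_j}=\prod_i(\sum_k h_{ik}u_k)^{h_{ij}}$ and consider the rational map $u\mapsto(\lambda_j(Hu)^{h_j})_j$. $(H,\lambda)$ is friendly if all $\lambda_j\ne0$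 and $\sum_j\lambda_j(Hu)^{h_j}=1$ identically. A friendly pair is a Horn pair if no row of $H$ is zero or a multiple of another row and the map is defined on and sends positive vectors to positive vectors; its restriction to $\mathbb{R}^{|J|}_{>0}$ is the Horn map. The reduction $(\tilde H,\tilde\lambda)$: replace each class of collinear rows of $H$ by their sum, delete zero rows, and take $\tilde\lambda$ the coefficient vector so that $(\tilde H,\tilde\lambda)$ defines the same rational map as $(H,\lambda)$. *)

(* Defs.v *)
From HB Require Import structures.
From mathcomp Require Import all_boot all_order all_algebra.
From mathcomp Require Import boolp reals exp.
Set Implicit Arguments. Unset Strict Implicit. Unset Printing Implicit Defensive.
Import Order.TTheory GRing.Theory Num.Theory.
Local Open Scope ring_scope.

(* Staged trees.  Edge labels are s_i, i : 'I_m (so I = 'I_m).            *)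
Inductive ltree (m : nat) : Type :=
  | Node : seq ('I_m * ltree m) -> ltree m.
Arguments Node {m}.

(* root-to-leaf paths, as the sequences of labels met along them; the     *)
(* list position is the path index j (distinct paths may carry the same   *)
(* label sequence, they are still distinct entries).                      *)
Fixpoint paths m (t : ltree m) : seq (seq 'I_m) :=
  match t with
  | Node cs =>
      if cs is [::] then [:: [::]]
      else flatten (map (fun c => map (cons c.1) (paths c.2)) cs)
  end.

Fixpoint florets_seq m (t : ltree m) : seq (seq 'I_m) :=
  match t with
  | Node cs =>
      (if cs is [::] then [::] else [:: map fst cs])
        ++ flatten (map (fun c => florets_seq c.2) cs)
  end.

Fixpoint local_ok m (t : ltree m) : bool :=
  match t with
  | Node cs =>
      [&& nilp cs || (1 < size cs)%N, uniq (map fst cs)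
        & all id (map (fun c => local_ok c.2) cs)]
  end.

Definition staged_tree m (t : ltree m) : Prop :=
  local_ok t /\
  forall f g, f \in florets_seq t -> g \in florets_seq t ->
    perm_eq f g \/ ~~ has (fun x => x \in g) f.

(* the set F of florets (a floret with distinct labels is a set) *)
Definition florets m (t : ltree m) : seq {set 'I_m} :=
  undup [seq [set x in f] | f <- florets_seq t].

Definition mu m (t : ltree m) (i : 'I_m) (j : 'I_(size (paths t))) : nat :=
  count_mem i (nth [::] (paths t) j).
Arguments mu {m} t i j.

Definition model (R : realType) m (t : ltree m)
    (p : 'I_(size (paths t)) -> R) : Prop :=
  exists s : 'I_m -> R,
    [/\ (forall i, 0 < s i < 1),
        (forall f, f \in florets t -> \sum_(i in f) s i = 1)
      & forall j, p j = \prod_(i < m) s i ^+ mu t i j].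
Arguments model R {m} t p.

Definition Hst m (t : ltree m) :
    'M[int]_(m + size (florets t), size (paths t)) :=
  \matrix_(r, j)
    match split r with
    | inl i => (mu t i j)%:Z
    | inr a => - \sum_(l in nth set0 (florets t) a) (mu t l j)%:Z
    end.
Arguments Hst {m} t.

Definition lamst (R : realType) m (t : ltree m) : 'I_(size (paths t)) -> R :=
  fun j => (-1) ^ (\sum_(a < size (florets t)) Hst t (rshift m a) j).
Arguments lamst R {m} t j.

Section Horn.
Variable R : realType.

Definition Hu k N (H : 'M[int]_(k, N)) (u : 'I_N -> R) (i : 'I_k) : R :=
  \sum_(l < N) (H i l)%:~R * u l.

Definition horn k N (H : 'M[int]_(k, N)) (lam : 'I_N -> R) (u : 'I_N -> R)
    (j : 'I_N) : R :=
  lam j * \prod_(i < k) Hu H u i ^ (H i j).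

Definition nzrow k N (H : 'M[int]_(k, N)) (i : 'I_k) : Prop :=
  exists l, H i l != 0.

(* (zero rows contribute the constant factor 0^0 = 1)                     *)
Definition generic k N (H : 'M[int]_(k, N)) (u : 'I_N -> R) : Prop :=
  forall i, nzrow H i -> Hu H u i != 0.

Definition horn_defined k N (H : 'M[int]_(k, N)) (u : 'I_N -> R) : Prop :=
  forall i, (exists l, H i l < 0) -> Hu H u i != 0.

Definition row_mult k N (H : 'M[int]_(k, N)) (i i' : 'I_k) : Prop :=
  exists c : rat, forall l, (H i l)%:~R = c * (H i' l)%:~R.

Definition friendly k N (H : 'M[int]_(k, N)) (lam : 'I_N -> R) : Prop :=
  [/\ (forall j, \sum_(i < k) H i j = 0),
      (forall j, lam j != 0)
    & forall u, generic H u -> \sum_(j < N) horn H lam u j = 1].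

Definition horn_pair k N (H : 'M[int]_(k, N)) (lam : 'I_N -> R) : Prop :=
  [/\ friendly H lam,
      (forall i, nzrow H i),
      (forall i i', i != i' -> ~ row_mult H i i')
    & forall u, (forall j, 0 < u j) ->
        horn_defined H u /\ forall j, 0 < horn H lam u j].

Definition cls k N (H : 'M[int]_(k, N)) (i : 'I_k) : {set 'I_k} :=
  [set i' | `[< nzrow H i' /\ row_mult H i' i >]].

(* (H', lam') is the reduction of (H, lam): the rows of H' are exactly    *)
(* (each once) the nonzero sums of the collinearity classes of nonzero    *)
(* rows of H, and (H', lam') defines the same rational map as (H, lam).   *)
Definition is_reduction k k' N (H : 'M[int]_(k, N)) (lam : 'I_N -> R)
    (H' : 'M[int]_(k', N)) (lam' : 'I_N -> R) : Prop :=
  exists g : 'I_k' -> 'I_k,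
    (forall a, nzrow H (g a)) /\
    [/\ (forall a b, cls H (g a) = cls H (g b) -> a = b),
        (forall i, nzrow H i ->
           (exists l, \sum_(i' in cls H i) H i' l != 0) ->
           exists a, cls H (g a) = cls H i),
        (forall a l, H' a l = \sum_(i' in cls H (g a)) H i' l),
        (forall a, nzrow H' a) &
      forall u, generic H u -> generic H' u ->
          forall j, horn H lam u j = horn H' lam' u j].

Definition loglik N (u p : 'I_N -> R) : R := \sum_(j < N) u j * ln (p j).

Definition is_MLE N (M : ('I_N -> R) -> Prop) (u q : 'I_N -> R) : Prop :=
  M q /\ forall p, M p -> loglik u p <= loglik u q /\
                    (loglik u p = loglik u q -> forall j, p j = q j).

End Horn.

(* Main.v *)
Require Import Defs.
From HB Require Import structures.
From mathcomp Require Import all_boot all_order all_algebra.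
From mathcomp Require Import boolp reals exp.
From mathcomp Require Import ring lra zify.
Set Implicit Arguments. Unset Strict Implicit. Unset Printing Implicit Defensive.
Import Order.TTheory GRing.Theory Num.Theory.
Local Open Scope ring_scope.
Section Cross.
Variable N : nat.
Definition cross (p q : 'I_N -> int) := forall l l', p l * q l' = p l' * q l.

Lemma cross_refl p : cross p p. Proof. by move=> l l'; rewrite mulrC. Qed.
Lemma cross_sym p q : cross p q -> cross q p.
Proof. by move=> h l l'; rewrite [LHS]mulrC -h mulrC. Qed.
Lemma cross_trans p q r l0 : q l0 != 0 -> cross p q -> cross q r -> cross p r.
Proof.
move=> nz h1 h2 l l'; apply: (mulIf (mulf_neq0 nz nz)).
have e1 := h1 l l0; have e2 := h1 l' l0; have e3 := h2 l0 l; have e4 := h2 l0 l'.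
transitivity ((p l * q l0) * (q l0 * r l')); first by ring.
rewrite e1 e4.
transitivity ((p l0 * r l0) * (q l * q l')); first by ring.
transitivity ((p l' * q l0) * (q l0 * r l)); last by ring.
by rewrite e2 e3; ring.
Qed.
Lemma cross_sum (I : finType) (P : pred I) (F : I -> 'I_N -> int) q :
  (forall i, P i -> cross (F i) q) -> cross (fun l => \sum_(i | P i) F i l) q.
Proof. by move=> h l l'; rewrite !mulr_suml; apply: eq_bigr => i Pi; apply: h. Qed.

Variable R : realType.
Definition lin (p : 'I_N -> int) (u : 'I_N -> R) := \sum_(l < N) (p l)%:~R * u l.

Lemma lin_cross p q u u0 : cross p q -> lin p u * lin q u0 = lin p u0 * lin q u.
Proof.
move=> h; rewrite /lin !big_distrlr /= [RHS]exchange_big /=.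
apply: eq_bigr => l _; apply: eq_bigr => l' _.
have : ((p l)%:~R * (q l')%:~R : R) = (p l')%:~R * (q l)%:~R by rewrite -!intrM h.
move=> e; transitivity ((p l)%:~R * (q l')%:~R * (u l * u0 l')); first by ring.
rewrite e; ring.
Qed.

Definition delta (l : 'I_N) : 'I_N -> R := fun l' => (l' == l)%:R.
Lemma lin_delta p l : lin p (delta l) = (p l)%:~R.
Proof.
rewrite /lin (bigD1 l) //= big1 ?addr0 /delta ?eqxx ?mulr1 // => i /negPf ->.
by rewrite mulr0.
Qed.
End Cross.

Section Mat.
Variables (R : realType) (k N : nat) (H : 'M[int]_(k, N)).

Lemma HuE (u : 'I_N -> R) i : Hu H u i = lin (fun l => H i l) u. Proof. by []. Qed.

Lemma not_nzrow i : ~ nzrow H i -> forall l, H i l = 0.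
Proof. by move=> h l; apply/eqP; apply/negPn/negP => nz; apply: h; exists l. Qed.

Lemma rm_cross i i' : row_mult H i i' -> cross (fun l => H i l) (fun l => H i' l).
Proof.
move=> [c hc] l l'; apply: (@intr_inj rat); rewrite !intrM hc (hc l'); ring.
Qed.

Lemma cross_rm i i' : cross (fun l => H i l) (fun l => H i' l) -> nzrow H i' ->
  row_mult H i i'.
Proof.
move=> hc [l0 h0]; exists ((H i l0)%:~R / (H i' l0)%:~R) => l.
have hb : ((H i' l0)%:~R : rat) != 0 by rewrite intr_eq0.
apply: (mulIf hb); have := hc l l0 => /(congr1 (fun z => (z%:~R : rat))).
rewrite !intrM => ->; by field.
Qed.

Lemma in_clsP i i' : nzrow H i ->
  i' \in cls H i <-> nzrow H i' /\ cross (fun l => H i' l) (fun l => H i l).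
Proof.
move=> nzi; rewrite inE; split.
  by move/asboolP => [h1 h2]; split => //; apply: rm_cross.
by move=> [h1 h2]; apply/asboolP; split => //; apply: cross_rm.
Qed.

Lemma cls_nz i i' : i' \in cls H i -> nzrow H i'.
Proof. by rewrite inE => /asboolP []. Qed.

Lemma cls_self i : nzrow H i -> i \in cls H i.
Proof. by move=> h; apply/in_clsP => //; split => //; apply: cross_refl. Qed.

Lemma cls_eq i j : nzrow H i -> j \in cls H i -> cls H j = cls H i.
Proof.
move=> nzi hj; have [nzj cji] := (in_clsP _ nzi).1 hj.
have [l0 h0] := nzi; have [l1 h1] := nzj.
apply/setP => x; apply/idP/idP.
  move=> hx; have [nzx cxj] := (in_clsP _ nzj).1 hx.
  by apply/in_clsP => //; split => //; apply: cross_trans h1 cxj cji.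
move=> hx; have [nzx cxi] := (in_clsP _ nzi).1 hx.
by apply/in_clsP => //; split => //; apply: cross_trans h0 cxi (cross_sym cji).
Qed.

Lemma cls_cross i j : nzrow H i -> cls H i = cls H j ->
  cross (fun l => H i l) (fun l => H j l).
Proof.
move=> nzi e; have := cls_self nzi; rewrite e => hi.
have nzj : nzrow H j.
  move: hi; rewrite inE => /asboolP [_ [c hc]]; have [l hl] := nzi.
  exists l; apply/eqP => h0; move: (hc l); rewrite h0 mulr0 => /eqP.
  by rewrite intr_eq0 (negPf hl).
by have [] := (in_clsP _ nzj).1 hi.
Qed.

Lemma Hu_cross i j (u u0 : 'I_N -> R) : cross (fun l => H i l) (fun l => H j l) ->
  Hu H u i * Hu H u0 j = Hu H u0 i * Hu H u j.
Proof. exact: lin_cross. Qed.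
End Mat.
Section Red.
Variables (R : realType) (k N k' : nat) (H : 'M[int]_(k, N)) (H' : 'M[int]_(k', N)).
Variable g : 'I_k' -> 'I_k.
Hypothesis hg : forall a, nzrow H (g a).
Hypothesis hinj : forall a b, cls H (g a) = cls H (g b) -> a = b.
Hypothesis hsurj : forall i, nzrow H i ->
  (exists l, \sum_(i' in cls H i) H i' l != 0) -> exists a, cls H (g a) = cls H i.
Hypothesis hH' : forall a l, H' a l = \sum_(i' in cls H (g a)) H i' l.
Hypothesis hnz : forall a, nzrow H' a.

Lemma cross_H'g a : cross (fun l => H' a l) (fun l => H (g a) l).
Proof.
have -> : (fun l => H' a l) = (fun l => \sum_(i' in cls H (g a)) H i' l).
  by apply: funext => l; rewrite hH'.
apply: cross_sum => i hi; have [] := (in_clsP _ (hg a)).1 hi; done.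
Qed.

Lemma Hu_H'g a (u u0 : 'I_N -> R) :
  Hu H' u a * Hu H u0 (g a) = Hu H' u0 a * Hu H u (g a).
Proof. exact: lin_cross (cross_H'g a). Qed.

Lemma generic_red (u : 'I_N -> R) : generic H u -> generic H' u.
Proof.
move=> gu a _; apply/negP => /eqP h0.
have [l hl] := hnz a; move: hl; apply/negP; rewrite negbK.
have := Hu_H'g a u (delta R l); rewrite h0 mul0r => /esym /eqP.
rewrite mulf_eq0 (negPf (gu _ (hg a))) orbF.
by rewrite /Hu -/(lin (fun l' => H' a l') (delta R l)) lin_delta intr_eq0.
Qed.

Definition nzsum (C : {set 'I_k}) := `[< exists l, \sum_(i in C) H i l != 0 >].

Lemma big_red (V : Type) (idx : V) (op : Monoid.com_law idx) (F : 'I_k -> V) :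
  (forall i, nzrow H i -> (forall l, \sum_(i' in cls H i) H i' l = 0) ->
     \big[op/idx]_(i' in cls H i) F i' = idx) ->
  \big[op/idx]_(i | `[< nzrow H i >]) F i =
  \big[op/idx]_a \big[op/idx]_(i in cls H (g a)) F i.
Proof.
move=> hz.
pose A := [pred i | `[< nzrow H i >]].
rewrite (eq_bigl (fun i => i \in A)) //.
rewrite (partition_big_imset (cls H)) /=.
have e1 : forall C, C \in [set cls H x | x in A] ->
    \big[op/idx]_(i in A | cls H i == C) F i = \big[op/idx]_(i in C) F i.
  move=> C /imsetP [i0 hi0 ->]; apply: eq_bigl => i.
  have nz0 : nzrow H i0 by move: hi0; rewrite inE => /asboolP.
  apply/idP/idP.
    move=> /andP [hi /eqP <-]; apply: cls_self; by move: hi; rewrite inE => /asboolP.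
  move=> hi; rewrite inE; apply/andP; split.
    by apply/asboolP; apply: cls_nz hi.
  by rewrite (cls_eq nz0 hi).
rewrite (eq_bigr _ e1) (bigID nzsum) /= [X in op _ X]big1 ?Monoid.mulm1; last first.
  move=> C /andP [/imsetP [i0 hi0 ->] hn]; apply: hz.
    by move: hi0; rewrite inE => /asboolP.
  by move=> l; apply/eqP; apply/negPn/negP => hl; move/negP: hn; apply; apply/asboolP; exists l.
have -> : \big[op/idx]_(C in [set cls H x | x in A] | nzsum C) \big[op/idx]_(i in C) F i =
          \big[op/idx]_(C in [set cls H (g a) | a in 'I_k']) \big[op/idx]_(i in C) F i.
  apply: eq_bigl => C; apply/idP/idP.
    move=> /andP [/imsetP [i0 hi0 ->] hn].
    have nz0 : nzrow H i0 by move: hi0; rewrite inE => /asboolP.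
    have [a ha] := hsurj nz0 (asboolW hn).
    by apply/imsetP; exists a => //.
  move=> /imsetP [a _ ->]; apply/andP; split.
    by apply/imsetP; exists (g a) => //; rewrite inE; apply/asboolP.
  apply/asboolP; have [l hl] := hnz a; exists l; by rewrite -hH'.
rewrite big_imset //= => a b _ _; exact: hinj.
Qed.

Lemma colsum_red j : \sum_a H' a j = \sum_i H i j.
Proof.
rewrite (bigID (fun i => `[< nzrow H i >])) /= [X in _ + X]big1 ?addr0; last first.
  by move=> i /asboolPn h; apply: not_nzrow.
rewrite big_red; first by apply: eq_bigr => a _; rewrite hH'.
by move=> i _ h; apply: h.
Qed.

Lemma nocoll_red a b : a != b -> ~ row_mult H' a b.
Proof.
move=> nab hm; move/eqP: nab; apply.
have c1 := rm_cross hm.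
have [l0 h0] := hnz a; have [l1 h1] := hnz b.
have c2 : cross (fun l => H (g a) l) (fun l => H' b l).
  exact: cross_trans h0 (cross_sym (cross_H'g a)) c1.
have c3 : cross (fun l => H (g a) l) (fun l => H (g b) l).
  exact: cross_trans h1 c2 (cross_H'g b).
apply: hinj; apply: cls_eq (hg b) _.
by apply/in_clsP => //.
Qed.

Lemma prod_exprz (I : finType) (P : pred I) (x : R) (f : I -> int) : x != 0 ->
  \prod_(i | P i) x ^ f i = x ^ (\sum_(i | P i) f i).
Proof.
move=> nx; apply: esym; apply: (big_morph (fun n : int => x ^ n)).
  by move=> m n; rewrite expfzDr.
by rewrite expr0z.
Qed.

Lemma horn_nz (lam : 'I_N -> R) (u : 'I_N -> R) j :
  horn H lam u j = lam j * \prod_(i | `[< nzrow H i >]) Hu H u i ^ H i j.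
Proof.
rewrite /horn (bigID (fun i => `[< nzrow H i >])) /= [X in _ * (_ * X)]big1 ?mulr1 //.
by move=> i /asboolPn h; rewrite not_nzrow // expr0z.
Qed.

Lemma horn_red (lam : 'I_N -> R) (u0 : 'I_N -> R) : generic H u0 ->
  forall u, generic H u -> forall j,
  horn H lam u j =
  horn H' (fun j => horn H lam u0 j / \prod_a Hu H' u0 a ^ H' a j) u j.
Proof.
move=> g0 u gu j.
pose rho i := Hu H u i / Hu H u0 i.
have hrho : forall i i', nzrow H i -> i' \in cls H i -> rho i' = rho i.
  move=> i i' nzi hi; have [nzi' c] := (in_clsP _ nzi).1 hi.
  have := Hu_cross u u0 c; rewrite /rho => e.
  have n0 := g0 _ nzi; have n1 := g0 _ nzi'.
  apply/eqP; rewrite eqr_div // e; apply/eqP; ring.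
have step : \prod_(i | `[< nzrow H i >]) Hu H u i ^ H i j =
   \prod_(i | `[< nzrow H i >]) Hu H u0 i ^ H i j *
   \prod_a rho (g a) ^ H' a j.
  rewrite -[X in _ * X](_ : \prod_(i | `[< nzrow H i >]) rho i ^ H i j = _).
    rewrite -big_split /=; apply: eq_bigr => i /asboolP nzi.
    rewrite -expfzMl /rho mulrC divfK //; exact: g0.
  rewrite big_red.
    apply: eq_bigr => a _; rewrite (eq_bigr (fun i => rho (g a) ^ H i j)).
      by rewrite prod_exprz ?hH' // /rho mulf_neq0 ?invr_eq0 ?gu ?g0.
    by move=> i hi; rewrite (hrho _ _ (hg a) hi).
  move=> i nzi hz; rewrite (eq_bigr (fun i' => rho i ^ H i' j)).
    by rewrite prod_exprz ?hz ?expr0z // /rho mulf_neq0 ?invr_eq0 ?gu ?g0.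
  by move=> i' hi; rewrite (hrho _ _ nzi hi).
have hH'u : forall a, Hu H' u a = Hu H' u0 a * rho (g a).
  move=> a; rewrite /rho mulrA -(Hu_H'g a u u0) mulfK //; exact: g0.
have D0 : \prod_a Hu H' u0 a ^ H' a j != 0.
  by apply/prodf_neq0 => a _; apply: expfz_neq0; apply: generic_red.
have hP : \prod_(i < k') Hu H' u i ^ H' i j =
    \prod_a Hu H' u0 a ^ H' a j * \prod_a rho (g a) ^ H' a j.
  by rewrite -big_split; apply: eq_bigr => a _; rewrite hH'u expfzMl.
transitivity (horn H lam u0 j / \prod_a Hu H' u0 a ^ H' a j *
   (\prod_a Hu H' u0 a ^ H' a j * \prod_a rho (g a) ^ H' a j)).
  by rewrite horn_nz step [RHS]mulrA divfK // horn_nz mulrA.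
rewrite -hP; done.
Qed.
End Red.
Section Exist.
Variables (R : realType) (k N : nat) (H : 'M[int]_(k, N)).

Definition redS : {set 'I_k} :=
  [set i | [&& `[< nzrow H i >], nzsum H (cls H i) & [pick i' in cls H i] == Some i]].

Lemma exists_red (lam : 'I_N -> R) (u0 : 'I_N -> R) : generic H u0 ->
  exists k' (H' : 'M[int]_(k', N)) (lam' : 'I_N -> R), is_reduction H lam H' lam'.
Proof.
move=> g0.
pose g := fun a : 'I_#|redS| => (enum_val a : 'I_k).
pose H' : 'M[int]_(#|redS|, N) := \matrix_(a, l) \sum_(i' in cls H (g a)) H i' l.
have gS : forall a, g a \in redS by move=> a; apply: enum_valP.
have hg : forall a, nzrow H (g a).
  by move=> a; have := gS a; rewrite inE => /and3P [/asboolP].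
have hinj : forall a b, cls H (g a) = cls H (g b) -> a = b.
  move=> a b e; apply: enum_val_inj.
  have := gS a; rewrite inE => /and3P [_ _ /eqP ea].
  have := gS b; rewrite inE => /and3P [_ _ /eqP eb].
  have : Some (g a) = Some (g b) by rewrite -ea e eb.
  by case.
have hsurj : forall i, nzrow H i ->
    (exists l, \sum_(i' in cls H i) H i' l != 0) -> exists a, cls H (g a) = cls H i.
  move=> i nzi hs.
  have [r hr hp] : exists2 r, r \in cls H i & [pick x in cls H i] = Some r.
    case: pickP => [r hr | h0]; first by exists r.
    by have := h0 i; rewrite cls_self.
  have er := cls_eq nzi hr.
  have rS : r \in redS.
    rewrite inE; apply/and3P; split.
    - by apply/asboolP; apply: cls_nz hr.
    - by rewrite er; apply/asboolP.
    - by rewrite er hp.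
  exists (enum_rank_in rS r); rewrite /g enum_rankK_in //.
have hH' : forall a l, H' a l = \sum_(i' in cls H (g a)) H i' l by move=> a l; rewrite mxE.
have hnz : forall a, nzrow H' a.
  move=> a; have := gS a; rewrite inE => /and3P [_ /asboolP [l hl] _].
  by exists l; rewrite hH'.
exists #|redS|, H', (fun j => horn H lam u0 j / \prod_a Hu H' u0 a ^ H' a j).
exists g; split => //; split => //.
by move=> u gu _ j; apply: (horn_red hg hinj hsurj hH' hnz).
Qed.
End Exist.
Section PolyId.
Variable R : realType.

Lemma absz_le_sum (I : finType) (f : I -> nat) i : (f i <= \sum_i f i)%N.
Proof. by rewrite (bigD1 i) //= leq_addr. Qed.

Lemma poly_ident (K n : nat) (y z : 'I_K -> R) (lam : 'I_n -> R)
    (e : 'I_K -> 'I_n -> int) (bad : seq R) :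
  (forall a, y a != 0) ->
  (forall t, t \notin bad -> (forall a, y a + z a * t != 0) /\
      \sum_j lam j * \prod_a (y a + z a * t) ^ e a j = 1) ->
  \sum_j lam j * \prod_a y a ^ e a j = 1.
Proof.
move=> hy ht.
pose M := (\sum_a \sum_j `|e a j|)%N.
have hM : forall a j, 0 <= M%:Z + e a j.
  move=> a j; have h1 : (`|e a j| <= M)%N.
    apply: leq_trans (absz_le_sum (fun j => `|e a j|%N) j) _.
    exact: (absz_le_sum (fun a => \sum_j `|e a j|)%N a).
  have : - e a j <= `|e a j|%N by rewrite abszE ler_normr lexx orbT.
  move=> h2; rewrite -lerBlDr sub0r; apply: le_trans h2 _; by rewrite lez_nat.
pose lf a : {poly R} := (y a)%:P + z a *: 'X.
have lfE : forall a t, (lf a).[t] = y a + z a * t.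
  by move=> a t; rewrite /lf hornerD hornerC hornerZ hornerX.
pose Q : {poly R} := \sum_j lam j *: \prod_a lf a ^+ absz (M%:Z + e a j) - \prod_a lf a ^+ M.
have QE : forall t, (forall a, y a + z a * t != 0) ->
    Q.[t] = \prod_a (y a + z a * t) ^+ M *
            (\sum_j lam j * \prod_a (y a + z a * t) ^ e a j - 1).
  move=> t nz; rewrite /Q hornerD hornerN horner_sum horner_prod mulrBr mulr1.
  congr (_ - _); last by apply: eq_bigr => a _; rewrite horner_exp lfE.
  rewrite mulr_sumr; apply: eq_bigr => j _; rewrite hornerZ horner_prod.
  rewrite mulrCA -big_split /=; congr (_ * _); apply: eq_bigr => a _.
  rewrite horner_exp lfE exprnP gez0_abs // expfzDr // exprnP //.
have Q0 : Q = 0.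
  apply/eqP/negPn/negP => nQ.
  pose cs := [seq (i%:R : R) | i <- iota 0 (size bad + size Q)].
  pose gs := [seq t <- cs | t \notin bad].
  have ucs : uniq cs.
    rewrite map_inj_uniq ?iota_uniq // => a b /eqP; rewrite eqr_nat => /eqP.
    done.
  have ugs : uniq gs by apply: filter_uniq.
  have rgs : all (root Q) gs.
    apply/allP => t; rewrite mem_filter => /andP [tb _].
    have [nz h1] := ht t tb; by rewrite /root QE // h1 subrr mulr0.
  have := max_poly_roots nQ rgs ugs.
  have hb : (count (fun t => t \in bad) cs <= size bad)%N.
    rewrite -size_filter; apply: uniq_leq_size; first exact: filter_uniq.
    by move=> x; rewrite mem_filter => /andP [].
  have := count_predC (fun t => t \in bad) cs.
  rewrite size_map size_iota /gs size_filter.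
  move=> e1 e2.
  have e3 : count [predC bad] cs = count (fun t => t \notin bad) cs by apply: eq_count.
  rewrite e3 in e1.
  have e4 : (count (fun t : R => t \notin bad) cs < size Q)%N := e2.
  have e5 : (count (fun t : R => t \in bad) cs + count (fun t : R => t \notin bad) cs
     = size bad + size Q)%N := e1.
  have e6 : (count (fun t : R => t \in bad) cs <= size bad)%N := hb.
  lia.
have := QE 0; rewrite Q0 horner0.
have nz0 : forall a, y a + z a * 0 != 0 by move=> a; rewrite mulr0 addr0.
move=> /(_ nz0) /esym /eqP; rewrite mulf_eq0 => /orP [h | ].
  have : \prod_a (y a + z a * 0) ^+ M != 0.
    by apply/prodf_neq0 => a _; rewrite expf_neq0.
  by rewrite h.
rewrite subr_eq0 => /eqP h; rewrite -[RHS]h; apply: eq_bigr => j _; congr (_ * _).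
by apply: eq_bigr => a _; rewrite mulr0 addr0.
Qed.
End PolyId.
Lemma mem_map_In (A : Type) (B : eqType) (f : A -> B) (l : seq A) y :
  y \in map f l -> exists x, List.In x l /\ y = f x.
Proof.
elim: l => [|a l IH] //=; rewrite in_cons => /orP [/eqP -> | /IH [x [h1 h2]]].
  by exists a; split; [left|].
by exists x; split; [right|].
Qed.

Lemma In_mem_map (A : Type) (B : eqType) (f : A -> B) (l : seq A) x :
  List.In x l -> f x \in map f l.
Proof.
elim: l => [|a l IH] //= [-> | h]; rewrite in_cons; first by rewrite eqxx.
by rewrite IH // orbT.
Qed.

Lemma eq_big_In (V : Type) (idx : V) (op : V -> V -> V) (A : Type) (l : seq A)
    (F G : A -> V) :
  (forall x, List.In x l -> F x = G x) ->
  \big[op/idx]_(x <- l) F x = \big[op/idx]_(x <- l) G x.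
Proof.
elim: l => [|a l IH] h; first by rewrite !big_nil.
rewrite !big_cons h; last by left.
by rewrite IH // => x hx; apply: h; right.
Qed.

Section Tree.
Variable m : nat.

Definition ltree_ind2 (P : ltree m -> Prop)
  (IH : forall cs, (forall c, List.In c cs -> P c.2) -> P (Node cs)) :
  forall t, P t :=
  fix F t := match t with
  | Node cs => IH cs ((fix G (l : seq ('I_m * ltree m)) :
        forall c, List.In c l -> P c.2 :=
      match l return forall c, List.In c l -> P c.2 with
      | [::] => fun c (h : List.In c [::]) => False_ind _ h
      | c0 :: l' => fun c h =>
          match h with
          | or_introl e =>
              match c0 as c1 return c1 = c -> P c.2 with
              | (a, t') => fun e' => eq_ind (a, t') (fun c => P c.2) (F t') c e'
              end e
          | or_intror h' => G l' c h'
          end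
      end) cs)
  end.

Lemma sum_paths_node (V : Type) (idx : V) (op : Monoid.law idx) cs (F : seq 'I_m -> V) :
  ~~ nilp cs ->
  \big[op/idx]_(p <- paths (Node cs)) F p =
  \big[op/idx]_(c <- cs) \big[op/idx]_(p <- paths c.2) F (c.1 :: p).
Proof.
case: cs => [|c cs] // _.
rewrite (_ : paths (Node (c :: cs)) =
   flatten [seq map (cons c.1) (paths c.2) | c <- c :: cs]) //.
rewrite big_flatten big_map.
by apply: eq_bigr => x _; rewrite big_map.
Qed.

Lemma paths_cons (c : 'I_m * ltree m) cs : paths (Node (c :: cs)) =
   flatten [seq map (cons c.1) (paths c.2) | c <- c :: cs].
Proof. by []. Qed.

Lemma paths_leaf : paths (@Node m [::]) = [:: [::]]. Proof. by []. Qed.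

Lemma florets_node (cs : seq ('I_m * ltree m)) :
  florets_seq (Node cs) = (if cs is [::] then [::] else [:: map fst cs]) ++
     flatten [seq florets_seq c.2 | c <- cs].
Proof. by []. Qed.

Lemma in_flor_node (cs : seq ('I_m * ltree m)) c g : List.In c cs -> g \in florets_seq c.2 ->
  g \in florets_seq (Node cs).
Proof.
move=> hc hg; rewrite florets_node mem_cat; apply/orP; right.
apply/flattenP; exists (florets_seq c.2) => //.
exact: (In_mem_map (fun c : 'I_m * ltree m => florets_seq c.2)).
Qed.

Lemma root_flor (cs : seq ('I_m * ltree m)) : ~~ nilp cs -> map fst cs \in florets_seq (Node cs).
Proof. by case: cs => // c cs _; rewrite florets_node mem_cat mem_head. Qed.

Lemma local_ok_node (cs : seq ('I_m * ltree m)) : local_ok (Node cs) ->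
  [/\ nilp cs || (1 < size cs)%N, uniq (map fst cs) &
      forall c, List.In c cs -> local_ok c.2].
Proof.
rewrite /= => /and3P [h1 h2 h3]; split => // c hc.
move/allP: h3; apply; exact: (In_mem_map (fun c : 'I_m * ltree m => local_ok c.2)).
Qed.

Lemma mem_paths_node (cs : seq ('I_m * ltree m)) p : ~~ nilp cs -> p \in paths (Node cs) ->
  exists c, List.In c cs /\ exists2 p', p' \in paths c.2 & p = c.1 :: p'.
Proof.
case: cs => [|c0 cs] // _; rewrite paths_cons => /flattenP [s hs hp].
have [c [hc e]] := mem_map_In hs; subst s.
by move/mapP: hp => [p' hp' ->]; exists c; split => //; exists p'.
Qed.

Lemma paths_node_mem (cs : seq ('I_m * ltree m)) c p' : List.In c cs -> p' \in paths c.2 ->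
  c.1 :: p' \in paths (Node cs).
Proof.
case: cs => [|c0 cs] // hc hp; rewrite paths_cons; apply/flattenP.
exists (map (cons c.1) (paths c.2)); last exact: map_f.
exact: (In_mem_map (fun c : 'I_m * ltree m => map (cons c.1) (paths c.2)) hc).
Qed.

Lemma paths_gt0 (t : ltree m) : (0 < size (paths t))%N.
Proof.
elim/ltree_ind2: t => -[|[a t] cs] IH //.
have := IH (a, t) (or_introl erefl); rewrite paths_cons /= size_cat size_map /=.
by move=> h; rewrite addn_gt0 h.
Qed.

Lemma path_label (t : ltree m) p x : p \in paths t -> x \in p ->
  exists2 f, f \in florets_seq t & x \in f.
Proof.
elim/ltree_ind2: t p => cs IH p; case: (boolP (nilp cs)) => [/nilP -> | ncs].
  by rewrite paths_leaf inE => /eqP ->.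
move=> /(mem_paths_node ncs) [c [hc [p' hp' ->]]]; rewrite in_cons => /orP [/eqP -> | hx].
  exists (map fst cs); first exact: root_flor.
  exact: (In_mem_map fst hc).
have [f hf hxf] := IH c hc p' hp' hx.
by exists f => //; apply: in_flor_node hc hf.
Qed.

Lemma floret_label (t : ltree m) f x : f \in florets_seq t -> x \in f ->
  exists2 p, p \in paths t & x \in p.
Proof.
elim/ltree_ind2: t f => cs IH f; rewrite florets_node mem_cat => /orP [hr | hf].
  case: cs IH hr => [|c0 cs] // IH; rewrite inE => /eqP -> /(mem_map_In) [c [hc ->]].
  have := paths_gt0 c.2; case e: (paths c.2) => [|p' ps] // _.
  exists (c.1 :: p'); last exact: mem_head.
  by apply: paths_node_mem => //; rewrite e mem_head.
move: hf => /flattenP [s hs hfs] hx.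
have [c [hc e]] := mem_map_In hs; subst s.
have [p' hp' hxp] := IH c hc f hfs hx.
by exists (c.1 :: p'); [apply: paths_node_mem | rewrite in_cons hxp orbT].
Qed.

Lemma floret_ok (t : ltree m) f : local_ok t -> f \in florets_seq t ->
  uniq f /\ (1 < size f)%N.
Proof.
elim/ltree_ind2: t f => cs IH f /local_ok_node [h1 h2 h3].
rewrite florets_node mem_cat => /orP [hr | hf].
  case: cs IH h1 h2 h3 hr => [|c0 cs] // IH h1 h2 h3; rewrite inE => /eqP ->.
  by split => //; rewrite size_map.
move: hf => /flattenP [s hs hfs]; have [c [hc e]] := mem_map_In hs; subst s.
exact: (IH c hc f (h3 c hc) hfs).
Qed.

Variable R : realType.
Definition W (s : 'I_m -> R) (p : seq 'I_m) := \prod_(x <- p) s x.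

Lemma sum_W (t : ltree m) (s : 'I_m -> R) :
  (forall g, g \in florets_seq t -> \sum_(x <- g) s x = 1) ->
  \sum_(p <- paths t) W s p = 1.
Proof.
elim/ltree_ind2: t => cs IH hf; case: (boolP (nilp cs)) => [/nilP -> | ncs].
  by rewrite paths_leaf big_seq1 /W big_nil.
rewrite sum_paths_node //.
rewrite (@eq_big_In _ _ _ _ _ _ (fun c : 'I_m * ltree m => s c.1)); last first.
  move=> c hc; rewrite (eq_bigr (fun p => s c.1 * W s p)); last first.
    by move=> p _; rewrite /W big_cons.
  rewrite -mulr_sumr IH ?mulr1 // => g hg; apply: hf; exact: in_flor_node hc hg.
by rewrite -(big_map fst xpredT s); apply: hf; apply: root_flor.
Qed.

Lemma sum_eq_count (x : 'I_m) (f : seq 'I_m) :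
  \sum_(l <- f) ((x == l)%:R : R) = (count_mem x f)%:R.
Proof.
elim: f => [|a f IH]; first by rewrite big_nil.
by rewrite big_cons IH /= natrD eq_sym.
Qed.

Lemma count_W (t : ltree m) (s : 'I_m -> R) (i : 'I_m) (f : seq 'I_m) :
  local_ok t -> i \in f -> uniq f ->
  (forall g, g \in florets_seq t -> \sum_(x <- g) s x = 1) ->
  (forall g, g \in florets_seq t -> perm_eq f g \/ ~~ has (fun x => x \in g) f) ->
  \sum_(p <- paths t) (count_mem i p)%:R * W s p =
  s i * \sum_(p <- paths t) (\sum_(l <- f) ((count_mem l p)%:R : R)) * W s p.
Proof.
move=> + hi uf; elim/ltree_ind2: t => cs IH /local_ok_node [h1 h2 h3] hsum hst.
case: (boolP (nilp cs)) => [/nilP -> | ncs].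
  by rewrite paths_leaf !big_seq1 /= big1 ?mul0r ?mulr0 // => l _.
have hsub : forall c, List.In c cs -> forall g, g \in florets_seq c.2 -> g \in florets_seq (Node cs).
  by move=> c hc g hg; apply: in_flor_node hc hg.
rewrite !sum_paths_node //.
rewrite (@eq_big_In _ _ _ _ _ _ (fun c : 'I_m * ltree m =>
   s c.1 * ((c.1 == i)%:R + s i * \sum_(p <- paths c.2)
      (\sum_(l <- f) ((count_mem l p)%:R : R)) * W s p))); last first.
  move=> c hc; rewrite -(IH c hc (h3 c hc)); last 2 first.
  - by move=> g hg; apply: hsum; apply: hsub hc _ hg.
  - by move=> g hg; apply: hst; apply: hsub hc _ hg.
  rewrite (eq_bigr (fun p => s c.1 * ((c.1 == i)%:R * W s p + (count_mem i p)%:R * W s p))).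
    rewrite -mulr_sumr big_split /= -mulr_sumr sum_W ?mulr1 // => g hg.
    by apply: hsum; apply: hsub hc _ hg.
  by move=> p _; rewrite /W big_cons /= natrD; ring.
rewrite [RHS]mulr_sumr.
rewrite [RHS](@eq_big_In _ _ _ _ _ _ (fun c : 'I_m * ltree m =>
   s i * (s c.1 * (c.1 \in f)%:R) + s c.1 * (s i * \sum_(p <- paths c.2)
      (\sum_(l <- f) ((count_mem l p)%:R : R)) * W s p))); last first.
  move=> c hc; rewrite (eq_bigr (fun p => s c.1 * ((c.1 \in f)%:R * W s p +
       (\sum_(l <- f) ((count_mem l p)%:R : R)) * W s p))).
    rewrite -mulr_sumr big_split /= -mulr_sumr sum_W ?mulr1; first ring.
    by move=> g hg; apply: hsum; apply: hsub hc _ hg.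
  move=> p _; rewrite /W big_cons /=.
  rewrite (eq_bigr (fun l => ((c.1 == l)%:R : R) + (count_mem l p)%:R)); last first.
    by move=> l _; rewrite natrD.
  by rewrite big_split /= sum_eq_count count_uniq_mem //; ring.
under [LHS]eq_bigr do rewrite mulrDr.
rewrite !big_split /=; congr (_ + _).
rewrite -mulr_sumr.
rewrite -(big_map fst xpredT (fun x => s x * (x == i)%:R)).
rewrite -(big_map fst xpredT (fun x => s x * (x \in f)%:R)).
have hr := root_flor ncs.
case: (hst _ hr) => [hp | hd].
  have hir : i \in map fst cs by rewrite -(perm_mem hp).
  rewrite [in RHS](eq_big_seq (fun x => s x)); last first.
    by move=> x hx; rewrite /= (perm_mem hp) hx mulr1.
  rewrite hsum // mulr1.
  rewrite (eq_bigr (fun x => s i * (i == x)%:R)); last first.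
    by move=> x _; rewrite eq_sym; case: eqP => [->|]; rewrite ?mulr1 ?mulr0.
  by rewrite -mulr_sumr sum_eq_count count_uniq_mem // hir mulr1.
rewrite big_seq [X in _ = _ * X]big_seq !big1 ?mulr0 // => x hx.
  case hxf : (x \in f); rewrite ?mulr0 //.
  by move/hasPn: hd => /(_ x hxf); rewrite hx.
have xi : x != i.
  by apply/eqP => e; subst x; move/hasPn: hd => /(_ i hi); rewrite hx.
by rewrite (negPf xi) mulr0.
Qed.
End Tree.
Lemma ln_le_sub1 (R : realType) (y : R) : 0 < y -> ln y <= y - 1.
Proof.
move=> hy; have := expR_ge1Dx (ln y); rewrite lnK ?posrE // => h; lra.
Qed.

Lemma ln_eq_sub1 (R : realType) (y : R) : 0 < y -> ln y = y - 1 -> y = 1.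
Proof.
move=> hy he; apply/eqP/negPn/negP => ny.
have hl : ln y != 0 by rewrite ln_eq0.
have := expR_gt1Dx hl; rewrite lnK ?posrE // => h; lra.
Qed.

Lemma ln_prod (R : realType) (I : finType) (f : I -> R) :
  (forall i, 0 < f i) -> ln (\prod_i f i) = \sum_i ln (f i).
Proof.
move=> hf.
suff : 0 < \prod_i f i /\ ln (\prod_i f i) = \sum_i ln (f i) by case.
pose K := fun (y1 y2 : R) => 0 < y2 /\ ln y2 = y1.
apply: (big_rec2 K); first by split; rewrite ?ln1.
move=> i y1 y2 _ [h1 h2]; split; first by rewrite mulr_gt0.
by rewrite lnM ?posrE // h2.
Qed.
Section Main.
Variables (R : realType) (m : nat) (T : ltree m).
Hypothesis hT : staged_tree T.

Local Notation N := (size (paths T)).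
Local Notation pth j := (nth [::] (paths T) j).
Local Notation nF := (size (florets T)).
Local Notation FS a := (nth set0 (florets T) a).
Local Notation H := (Hst T).

Lemma memF A : A \in florets T <-> exists2 f, f \in florets_seq T & A = [set x in f].
Proof.
rewrite /florets mem_undup; split.
  by move/mapP => [f hf ->]; exists f.
by move=> [f hf ->]; apply: map_f.
Qed.

Lemma FS_mem (a : 'I_nF) : FS a \in florets T.
Proof. exact: mem_nth. Qed.

Lemma FS_seq (a : 'I_nF) : exists2 f, f \in florets_seq T & FS a = [set x in f].
Proof. exact/memF/FS_mem. Qed.

Lemma FS_uniq (a b : 'I_nF) l : l \in FS a -> l \in FS b -> a = b.
Proof.
move=> ha hb; have [f hf ef] := FS_seq a; have [g hg eg] := FS_seq b.
case: (hT.2 f g hf hg) => [hp | hd].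
  apply: val_inj; apply/eqP; rewrite -(nth_uniq set0 (ltn_ord a) (ltn_ord b)) ?undup_uniq //.
  rewrite ef eg; apply/eqP/setP => x; by rewrite !inE (perm_mem hp).
move: ha hb; rewrite ef eg !inE => ha hb.
by move/hasPn: hd => /(_ l ha); rewrite hb.
Qed.

Lemma seq_FS f : f \in florets_seq T -> exists a : 'I_nF, FS a = [set x in f].
Proof.
move=> hf; have hA : [set x in f] \in florets T by apply/memF; exists f.
have hi : (index [set x in f] (florets T) < nF)%N by rewrite index_mem.
by exists (Ordinal hi); rewrite /= nth_index.
Qed.

Lemma sum_FS (V : nmodType) (a : 'I_nF) (G : 'I_m -> V) :
  exists2 f, f \in florets_seq T & \sum_(l in FS a) G l = \sum_(l <- f) G l.
Proof.
have [f hf ef] := FS_seq a; exists f => //.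
have [uf _] := floret_ok hT.1 hf.
rewrite big_uniq //; apply: eq_bigl => x; by rewrite ef inE.
Qed.

Lemma HstL i j : H (lshift nF i) j = (mu T i j)%:Z.
Proof. by rewrite mxE (unsplitK (inl i)). Qed.

Lemma HstR a j : H (rshift m a) j = - \sum_(l in FS a) (mu T l j)%:Z.
Proof. by rewrite mxE (unsplitK (inr a)). Qed.

Definition xl (u : 'I_N -> R) i := \sum_(j < N) (mu T i j)%:R * u j.
Definition Yf (u : 'I_N -> R) (a : 'I_nF) := \sum_(l in FS a) xl u l.

Lemma HuL u i : Hu H u (lshift nF i) = xl u i.
Proof. by apply: eq_bigr => j _; rewrite HstL. Qed.

Lemma HuR u a : Hu H u (rshift m a) = - Yf u a.
Proof.
rewrite /Hu /Yf /xl exchange_big -sumrN /=; apply: eq_bigr => j _.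
by rewrite HstR rmorphN rmorph_sum mulNr mulr_suml.
Qed.

Definition sh (u : 'I_N -> R) i := xl u i * \prod_(a < nF | i \in FS a) (Yf u a)^-1.

Lemma lamstE j : lamst R T j = \prod_a (-1) ^ H (rshift m a) j.
Proof. by rewrite /lamst -prod_exprz // oppr_eq0 oner_eq0. Qed.

Lemma horn_MF u j : (forall a, Yf u a != 0) ->
  horn H (lamst R T) u j = \prod_(i < m) sh u i ^+ mu T i j.
Proof.
move=> nY; rewrite /horn big_split_ord /=.
rewrite (eq_bigr (fun i => xl u i ^+ mu T i j)); last first.
  by move=> i _; rewrite HuL HstL -exprnP.
rewrite [X in _ * (_ * X)](eq_bigr (fun a => (-1) ^ H (rshift m a) j *
     Yf u a ^ H (rshift m a) j)); last by move=> a _; rewrite HuR expNrz.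
rewrite big_split /= lamstE.
have h1 : \prod_a (-1) ^ H (rshift m a) j * \prod_a (-1) ^ H (rshift m a) j = 1 :> R.
  rewrite -big_split big1 // => a _ /=; by rewrite -expfzMl mulrNN mulr1 exp1rz.
have -> : forall A B C : R, A * (B * (A * C)) = (A * A) * (B * C) by move=> *; ring.
rewrite h1 mul1r.
have -> : \prod_a Yf u a ^ H (rshift m a) j =
    \prod_(a < nF) \prod_(l < m) (if l \in FS a then (Yf u a)^-1 ^+ mu T l j else 1).
  apply: eq_bigr => a _; rewrite -big_mkcond /= HstR -sumrN -prod_exprz //.
  by apply: eq_bigr => l _; rewrite -exprz_inv -exprnP.
rewrite exchange_big /= -big_split /=; apply: eq_bigr => l _.
by rewrite -big_mkcond /= prodrXl -exprMn.
Qed.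

Lemma prod_count (s : 'I_m -> R) p :
  \prod_(i < m) s i ^+ count_mem i p = \prod_(x <- p) s x.
Proof.
elim: p => [|x p IH]; first by rewrite big_nil big1.
rewrite big_cons -IH /= (eq_bigr (fun i => s i ^+ (x == i) * s i ^+ count_mem i p)); last first.
  by move=> i _; rewrite exprD.
rewrite big_split /=; congr (_ * _).
rewrite (bigD1 x) //= eqxx expr1 big1 ?mulr1 // => i /negPf.
by rewrite eq_sym => ->.
Qed.

Lemma sum_pth (G : seq 'I_m -> R) :
  \sum_(j < N) G (pth j) = \sum_(p <- paths T) G p.
Proof. by rewrite [RHS](big_nth [::]) big_mkord. Qed.

Lemma count_pos l p : p \in paths T -> l \in p ->
  exists j : 'I_N, (0 < mu T l j)%N.
Proof.
move=> hp hl; have hi : (index p (paths T) < N)%N by rewrite index_mem.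
exists (Ordinal hi); rewrite /mu /= nth_index // -has_count has_pred1 //.
Qed.

Lemma label_pos (a : 'I_nF) l : l \in FS a -> exists j : 'I_N, (0 < mu T l j)%N.
Proof.
move=> hl; have [f hf ef] := FS_seq a; move: hl; rewrite ef inE => hl.
have [p hp hlp] := floret_label hf hl; exact: count_pos hp hlp.
Qed.

Lemma FS_nonempty (a : 'I_nF) : exists l, l \in FS a.
Proof.
have [f hf ef] := FS_seq a; have [_ hs] := floret_ok hT.1 hf.
move: ef hs; case: f hf => [|x f'] // hf ef _.
by exists x; rewrite ef inE mem_head.
Qed.

Lemma floret_nz (a : 'I_nF) : nzrow H (rshift m a).
Proof.
have [l hl] := FS_nonempty a; have [j hj] := label_pos hl.
exists j; rewrite HstR oppr_eq0; apply: lt0r_neq0.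
rewrite (bigD1 l) //=.
have h0 : (0 < (mu T l j)%:Z) by rewrite ltz_nat.
have h1 : 0 <= \sum_(i in FS a | i != l) (mu T i j)%:Z by apply: sumr_ge0.
lra.
Qed.

Lemma Y_nz u : generic H u -> forall a, Yf u a != 0.
Proof. by move=> gu a; have := gu _ (floret_nz a); rewrite HuR oppr_eq0. Qed.

Lemma prod_FS (G : 'I_nF -> R) (a : 'I_nF) l : l \in FS a -> \prod_(b < nF | l \in FS b) G b = G a.
Proof.
move=> hl; apply: big_pred1 => b /=; apply/idP/eqP => [hb | ->] //.
exact: FS_uniq hb hl.
Qed.

Lemma sh_FS (u : 'I_N -> R) (a : 'I_nF) l : l \in FS a -> sh u l = xl u l / Yf u a.
Proof. by move=> hl; rewrite /sh (prod_FS _ hl). Qed.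

Lemma tree_id u : (forall a, Yf u a != 0) -> \sum_j horn H (lamst R T) u j = 1.
Proof.
move=> nY; rewrite (eq_bigr _ (fun j _ => horn_MF j nY)).
transitivity (\sum_(j < N) (fun p => \prod_(i < m) sh u i ^+ count_mem i p) (pth j)).
  by [].
rewrite (sum_pth (fun p => \prod_(i < m) sh u i ^+ count_mem i p)).
transitivity (\sum_(p <- paths T) W (sh u) p).
  by apply: eq_bigr => p _; rewrite prod_count.
apply: sum_W => g hg.
have [a ea] := seq_FS hg; have [ug _] := floret_ok hT.1 hg.
rewrite (eq_big_seq (fun x => xl u x * (Yf u a)^-1)); last first.
  by move=> x hx; rewrite (sh_FS u (a := a)) // ea inE.
rewrite -mulr_suml.
have -> : \sum_(x <- g) xl u x = Yf u a.
  rewrite /Yf ea big_uniq //; apply: eq_bigl => x; by rewrite inE.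
by rewrite mulfV.
Qed.

Definition pos (u : 'I_N -> R) := forall j, 0 < u j.

Lemma xl_ge0 u : pos u -> forall i, 0 <= xl u i.
Proof. by move=> pu i; apply: sumr_ge0 => j _; rewrite mulr_ge0 ?ler0n ?ltW. Qed.

Lemma xl_gt0 u i j : pos u -> (0 < mu T i j)%N -> 0 < xl u i.
Proof.
move=> pu hj; rewrite /xl (bigD1 j) //=.
have h0 : 0 < (mu T i j)%:R * u j by rewrite mulr_gt0 ?ltr0n.
have h1 : 0 <= \sum_(k < N | k != j) (mu T i k)%:R * u k.
  by apply: sumr_ge0 => k _; rewrite mulr_ge0 ?ler0n ?ltW.
lra.
Qed.

Lemma xl_FS_gt0 (u : 'I_N -> R) (a : 'I_nF) l : pos u -> l \in FS a -> 0 < xl u l.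
Proof. by move=> pu hl; have [j hj] := label_pos hl; apply: xl_gt0 hj. Qed.

Lemma Y_gt0 (u : 'I_N -> R) (a : 'I_nF) : pos u -> 0 < Yf u a.
Proof.
move=> pu; have [l hl] := FS_nonempty a; rewrite /Yf (bigD1 l) //=.
have h0 := xl_FS_gt0 pu hl.
have h1 : 0 <= \sum_(i in FS a | i != l) xl u i by apply: sumr_ge0 => i _; apply: xl_ge0.
lra.
Qed.

Lemma generic_pos u : pos u -> generic H u.
Proof.
move=> pu r nzr; rewrite -(splitK r); case e: (split r) => [i|a] /=.
  rewrite HuL; have [j hj] := nzr; move: hj; rewrite -(splitK r) e /= HstL.
  rewrite eqz_nat -lt0n => hj; apply: lt0r_neq0; exact: xl_gt0 hj.
by rewrite HuR oppr_eq0 lt0r_neq0 ?Y_gt0.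
Qed.

Lemma xl_lt_Y (u : 'I_N -> R) (a : 'I_nF) l : pos u -> l \in FS a -> xl u l < Yf u a.
Proof.
move=> pu hl; have [f hf ef] := FS_seq a; have [uf sf] := floret_ok hT.1 hf.
have hlf : l \in f by move: hl; rewrite ef inE.
have : (0 < size (rem l f))%N by rewrite size_rem //; case: (size f) sf => // -[].
case e: (rem l f) => [|l' r] // _.
have : l' \in rem l f by rewrite e mem_head.
rewrite (mem_rem_uniq _ uf) inE => /andP [nl' hl'].
have hl'a : l' \in FS a by rewrite ef inE.
rewrite /Yf (bigD1 l) //= (bigD1 l') /=; last by rewrite hl'a nl'.
have h0 := xl_FS_gt0 pu hl'a.
have h1 : 0 <= \sum_(i < m | (i \in FS a) && (i != l) && (i != l')) xl u i.
  by apply: sumr_ge0 => i _; apply: xl_ge0.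
lra.
Qed.

Lemma sh_bounds (u : 'I_N -> R) (a : 'I_nF) l : pos u -> l \in FS a -> 0 < sh u l < 1.
Proof.
move=> pu hl; rewrite (sh_FS u hl).
have h0 := xl_FS_gt0 pu hl; have h1 := xl_lt_Y pu hl; have h2 := Y_gt0 a pu.
by rewrite divr_gt0 //= ltr_pdivrMr // mul1r.
Qed.

Lemma in_path_FS i j : (0 < mu T i j)%N -> exists a : 'I_nF, i \in FS a.
Proof.
move=> hj; have hp : pth j \in paths T by apply: mem_nth.
have hi : i \in pth j by rewrite -has_pred1 has_count.
have [f hf hif] := path_label hp hi; have [a ea] := seq_FS hf.
by exists a; rewrite ea inE.
Qed.

Lemma horn_pos u j : pos u -> 0 < horn H (lamst R T) u j.
Proof.
move=> pu; rewrite horn_MF; last by move=> a; rewrite lt0r_neq0 ?Y_gt0.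
apply: prodr_gt0 => i _; case e: (mu T i j) => [|n]; first by rewrite expr0.
have [a ha] : exists a : 'I_nF, i \in FS a by apply: (in_path_FS (j := j)); rewrite e.
by rewrite exprn_gt0 //; case/andP: (sh_bounds pu ha).
Qed.

Lemma FP (V : zmodType) (G : 'I_m -> V) :
  (forall l, (forall a : 'I_nF, l \notin FS a) -> G l = 0) ->
  \sum_(a < nF) \sum_(l in FS a) G l = \sum_l G l.
Proof.
move=> hG.
transitivity (\sum_(a < nF) \sum_(l < m) (if l \in FS a then G l else 0)).
  by apply: eq_bigr => a _; rewrite big_mkcond.
rewrite exchange_big; apply: eq_bigr => l _; rewrite -big_mkcond /=.
case: (pickP (fun a : 'I_nF => l \in FS a)) => [a ha | h0].
  rewrite (big_pred1 a) // => b /=; apply/idP/eqP => [hb | ->] //.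
  exact: FS_uniq hb ha.
rewrite big_pred0 // hG // => a; by rewrite h0.
Qed.

Lemma mu_nofloret l j : (forall a : 'I_nF, l \notin FS a) -> mu T l j = 0%N.
Proof.
move=> h; case e: (mu T l j) => [|n] //.
have [a ha] : exists a : 'I_nF, l \in FS a by apply: (in_path_FS (j := j)); rewrite e.
by move: (h a); rewrite ha.
Qed.

Lemma colsum_H j : \sum_r H r j = 0.
Proof.
rewrite big_split_ord /=.
rewrite (eq_bigr (fun i => (mu T i j)%:Z)); last by move=> i _; rewrite HstL.
rewrite [X in _ + X](eq_bigr (fun a : 'I_nF => - \sum_(l in FS a) (mu T l j)%:Z)); last first.
  by move=> a _; rewrite HstR.
rewrite sumrN FP ?subrr // => l hl; by rewrite mu_nofloret.
Qed.

Lemma xl_nofloret u l : (forall a : 'I_nF, l \notin FS a) -> xl u l = 0.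
Proof. by move=> h; rewrite /xl big1 // => j _; rewrite mu_nofloret // mul0r. Qed.

Definition shat (u : 'I_N -> R) i :=
  if `[< exists a : 'I_nF, i \in FS a >] then sh u i else 2^-1.

Lemma shat_FS u (a : 'I_nF) l : l \in FS a -> shat u l = xl u l / Yf u a.
Proof.
move=> hl; rewrite /shat; case: asboolP => [_ | h]; first exact: sh_FS.
by exfalso; apply: h; exists a.
Qed.

Lemma shat_bounds u i : pos u -> 0 < shat u i < 1.
Proof.
move=> pu; rewrite /shat; case: asboolP => [[a ha] | _]; first exact: sh_bounds ha.
apply/andP; split; first by rewrite invr_gt0 ltr0n.
by rewrite invf_lt1 ?ltr0n // ltr1n.
Qed.

Lemma shat_sum u (a : 'I_nF) : pos u -> \sum_(i in FS a) shat u i = 1.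
Proof.
move=> pu; rewrite (eq_bigr (fun i => xl u i / Yf u a)); last first.
  by move=> i hi; apply: shat_FS.
by rewrite -mulr_suml mulfV // lt0r_neq0 // Y_gt0.
Qed.

Lemma horn_shat u j : pos u ->
  horn H (lamst R T) u j = \prod_(i < m) shat u i ^+ mu T i j.
Proof.
move=> pu; rewrite horn_MF; last by move=> a; rewrite lt0r_neq0 ?Y_gt0.
apply: eq_bigr => i _; case e: (mu T i j) => [|n]; first by rewrite !expr0.
have [a ha] : exists a : 'I_nF, i \in FS a by apply: (in_path_FS (j := j)); rewrite e.
by rewrite (shat_FS u ha) (sh_FS u ha).
Qed.

Lemma model_ext (p q : 'I_N -> R) : (forall j, p j = q j) -> model R T p -> model R T q.
Proof.
move=> e [s [h1 h2 h3]]; exists s; split => // j; by rewrite -e.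
Qed.

Lemma model_horn u : pos u -> model R T (fun j => horn H (lamst R T) u j).
Proof.
move=> pu; exists (shat u); split.
- by move=> i; apply: shat_bounds.
- move=> A hA; have hi : (index A (florets T) < nF)%N by rewrite index_mem.
  have e : FS (Ordinal hi) = A by rewrite nth_index.
  by rewrite -e; apply: shat_sum.
- by move=> j; apply: horn_shat.
Qed.

Lemma loglikE (u : 'I_N -> R) (p : 'I_N -> R) (s : 'I_m -> R) :
  (forall i, 0 < s i) -> (forall j, p j = \prod_(i < m) s i ^+ mu T i j) ->
  loglik u p = \sum_(i < m) xl u i * ln (s i).
Proof.
move=> hs hp; rewrite /loglik.
rewrite (eq_bigr (fun j => \sum_(i < m) u j * ((mu T i j)%:R * ln (s i)))); last first.
  move=> j _; rewrite hp ln_prod; last by move=> i; rewrite exprn_gt0.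
  rewrite mulr_sumr; apply: eq_bigr => i _; by rewrite lnXn // mulr_natl.
rewrite exchange_big; apply: eq_bigr => i _; rewrite /xl mulr_suml.
by apply: eq_bigr => j _; ring.
Qed.

Lemma mle u : pos u -> is_MLE (model R T) u (fun j => horn H (lamst R T) u j).
Proof.
move=> pu; split; first exact: model_horn.
move=> p [s [hs hsum hp]].
have s0 : forall i, 0 < s i by move=> i; case/andP: (hs i).
have t0 : forall i, 0 < shat u i by move=> i; case/andP: (shat_bounds i pu).
rewrite (loglikE u s0 hp) (loglikE u t0 (fun j => horn_shat j pu)).
pose y i := s i / shat u i.
have y0 : forall i, 0 < y i by move=> i; rewrite divr_gt0.
have hln : forall i, ln (s i) = ln (y i) + ln (shat u i).
  by move=> i; rewrite /y ln_div ?posrE // subrK.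
pose d i := xl u i * ((y i - 1) - ln (y i)).
have d0 : forall i, 0 <= d i.
  move=> i; rewrite /d mulr_ge0 ?xl_ge0 //; have := ln_le_sub1 (y0 i); lra.
have D0 : \sum_i xl u i * (y i - 1) = 0.
  rewrite -(@FP _ (fun i => xl u i * (y i - 1))); last first.
    by move=> l hl; rewrite xl_nofloret // mul0r.
  apply: big1 => a _.
  rewrite (eq_bigr (fun i => Yf u a * s i - xl u i)); last first.
    move=> i hi; rewrite /y (shat_FS u hi).
    have hx := xl_FS_gt0 pu hi; have hY := Y_gt0 a pu.
    field; by rewrite !lt0r_neq0.
  rewrite sumrB -mulr_sumr hsum ?FS_mem // mulr1 /Yf subrr //.
have eq1 : \sum_i xl u i * ln (s i) = \sum_i xl u i * ln (shat u i) - \sum_i d i.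
  have -> : \sum_i d i = \sum_i xl u i * (y i - 1) - \sum_i xl u i * ln (y i).
    by rewrite -sumrB; apply: eq_bigr => i _; rewrite /d; ring.
  rewrite D0 sub0r opprK -big_split /=; apply: eq_bigr => i _.
  by rewrite hln; ring.
have sd0 : 0 <= \sum_i d i by apply: sumr_ge0 => i _.
rewrite eq1; split; first lra.
move=> he j.
have sd : \sum_i d i = 0 by lra.
rewrite hp horn_shat //; apply: eq_bigr => i _.
case e: (mu T i j) => [|n]; first by rewrite !expr0.
have hx : 0 < xl u i by apply: (xl_gt0 (j := j)); rewrite ?e.
have di : d i = 0 by apply: (psumr_eq0P (fun i _ => d0 i) sd).
have : (y i - 1) - ln (y i) = 0.
  by move: di; rewrite /d => /eqP; rewrite mulf_eq0 (negPf (lt0r_neq0 hx)) => /eqP.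
move=> h; have yi : y i = 1 by apply: ln_eq_sub1 (y0 i) _; lra.
move: yi; rewrite /y => /(congr1 (fun z => z * shat u i)).
by rewrite divfK ?mul1r ?lt0r_neq0 // => ->.
Qed.

Lemma sum_set_seq (G : 'I_m -> R) g : uniq g ->
  \sum_(i in [set x in g]) G i = \sum_(x <- g) G x.
Proof. by move=> ug; rewrite big_uniq //; apply: eq_bigl => x; rewrite inE. Qed.

Lemma xl_model (p : 'I_N -> R) (s : 'I_m -> R) (a : 'I_nF) i :
  (forall f, f \in florets T -> \sum_(i in f) s i = 1) ->
  (forall j, p j = \prod_(i < m) s i ^+ mu T i j) ->
  i \in FS a -> xl p i = s i * Yf p a.
Proof.
move=> hsum hp hi.
have [f hf ef] := FS_seq a; have [uf _] := floret_ok hT.1 hf.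
have hif : i \in f by move: hi; rewrite ef inE.
have hx : forall l, xl p l = \sum_(q <- paths T) (count_mem l q)%:R * W s q.
  move=> l; rewrite /xl -(sum_pth (fun q => (count_mem l q)%:R * W s q)).
  by apply: eq_bigr => j _; rewrite hp; congr (_ * _); exact: prod_count.
have hs1 : forall g, g \in florets_seq T -> \sum_(x <- g) s x = 1.
  move=> g hg; have [b eb] := seq_FS hg; have [ug _] := floret_ok hT.1 hg.
  by rewrite -sum_set_seq // -eb; apply: hsum; apply: FS_mem.
have hs2 := fun g hg => hT.2 f g hf hg.
rewrite hx (count_W hT.1 hif uf hs1 hs2).
congr (_ * _); rewrite /Yf ef sum_set_seq // (eq_bigr _ (fun l _ => hx l)).
rewrite exchange_big; apply: eq_bigr => q _; by rewrite mulr_suml.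
Qed.

Lemma model_iff p : model R T p <->
  exists u, pos u /\ forall j, p j = horn H (lamst R T) u j.
Proof.
split; last first.
  move=> [u [pu hu]]; apply: (model_ext (p := fun j => horn H (lamst R T) u j)).
    by move=> j; rewrite hu.
  exact: model_horn.
move=> [s [hs hsum hp]].
have s0 : forall i, 0 < s i by move=> i; case/andP: (hs i).
have pp : pos p by move=> j; rewrite hp; apply: prodr_gt0 => i _; rewrite exprn_gt0.
exists p; split => // j; rewrite horn_MF; last by move=> a; rewrite lt0r_neq0 ?Y_gt0.
rewrite hp; apply: eq_bigr => i _; case e: (mu T i j) => [|n]; first by rewrite !expr0.
have [a ha] : exists a : 'I_nF, i \in FS a by apply: (in_path_FS (j := j)); rewrite e.
rewrite (sh_FS p ha) (xl_model hsum hp ha) mulfK //.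
by rewrite lt0r_neq0 ?Y_gt0.
Qed.

End Main.

Lemma Hu_lin (R : realType) k N (M : 'M[int]_(k, N)) (u v : 'I_N -> R) t r :
  Hu M (fun l => u l + t * v l) r = Hu M u r + Hu M v r * t.
Proof.
rewrite /Hu mulr_suml -big_split; apply: eq_bigr => l _ /=; ring.
Qed.

Unset Implicit Arguments.

Theorem corollary3p6 (R : realType) (m : nat) (T : ltree m)
    (hT : staged_tree T) :
  (exists (k' : nat) (H' : 'M[int]_(k', size (paths T)))
          (lam' : 'I_(size (paths T)) -> R),
      is_reduction (Hst T) (lamst R T) H' lam') /\
  (forall (k' : nat) (H' : 'M[int]_(k', size (paths T)))
          (lam' : 'I_(size (paths T)) -> R),
      is_reduction (Hst T) (lamst R T) H' lam' ->
      [/\ horn_pair H' lam',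
          (forall u : 'I_(size (paths T)) -> R, (forall j, 0 < u j) ->
             is_MLE (model R T) u (horn H' lam' u))
        & (forall p : 'I_(size (paths T)) -> R,
             model R T p <->
             exists u : 'I_(size (paths T)) -> R,
               (forall j, 0 < u j) /\ forall j, p j = horn H' lam' u j)]).
Proof.
pose v : 'I_(size (paths T)) -> R := fun _ => 1.
have pv : pos v by move=> j; rewrite /v ltr01.
split.
  by apply: (@exists_red R _ _ (Hst T) (lamst R T) v); apply: generic_pos pv.
move=> k' H' lam' [g [hg [hinj hsurj hH' hnz heq]]].
have gr : forall u : 'I_(size (paths T)) -> R, generic (Hst T) u -> generic H' u.
  move=> u gu; exact: (generic_red hg hH' hnz gu).
have HE : forall u : 'I_(size (paths T)) -> R, generic (Hst T) u -> forall j,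
    horn H' lam' u j = horn (Hst T) (lamst R T) u j.
  by move=> u gu j; rewrite heq //; apply: gr.
have Hpos : forall u : 'I_(size (paths T)) -> R, pos u -> forall j, horn H' lam' u j = horn (Hst T) (lamst R T) u j.
  by move=> u pu; apply: HE; apply: generic_pos pu.
split.
- split.
  + split.
    * by move=> j; rewrite (colsum_red hg hinj hsurj hH' hnz) colsum_H.
    * move=> j; apply/eqP => e; have := horn_pos hT j pv.
      by rewrite -Hpos // /horn e mul0r ltxx.
    * move=> u gu.
      pose bad := [seq - Hu (Hst T) u r / Hu (Hst T) v r | r <- enum 'I_(m + size (florets T))].
      apply: (poly_ident (z := fun a => Hu H' v a) (bad := bad)).
        by move=> a; apply: gu; apply: hnz.
      move=> t tb.
      pose ut := fun l => u l + t * v l.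
      have gt : generic (Hst T) ut.
        move=> r nzr; rewrite /ut Hu_lin; apply/eqP => e0; move/negP: tb; apply.
        have nv : Hu (Hst T) v r != 0 by apply: generic_pos pv _ nzr.
        apply/mapP; exists r; first by rewrite mem_enum.
        apply: (mulIf nv); rewrite divfK // mulrC.
        by apply/eqP; rewrite -subr_eq0 opprK addrC e0.
      split.
        by move=> a; rewrite -(Hu_lin H' u v t a); apply: gr gt a (hnz a).
      transitivity (\sum_j horn (Hst T) (lamst R T) ut j); last exact (tree_id hT (Y_nz hT gt)).
      apply: eq_bigr => j _.
      by rewrite -HE //; rewrite /horn; congr (_ * _); apply: eq_bigr => a _; rewrite Hu_lin.
  + exact: hnz.
  + by move=> a b nab; apply: (nocoll_red hg hinj hH' hnz nab).
  + move=> u pu; split.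
      by move=> i _; apply: gr (generic_pos hT pu) i (hnz i).
    by move=> j; rewrite Hpos //; apply: horn_pos.
- move=> u pu.
  have -> : horn H' lam' u = (fun j => horn (Hst T) (lamst R T) u j).
    by apply: funext => j; apply: Hpos.
  exact: mle.
- move=> p; rewrite (model_iff hT); split => -[u [pu hu]]; exists u; split => // j;
    by rewrite hu Hpos.
Qed.
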